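(* Let $p=\infty$. For every finite $S\subset\mathcal X$ and every $t\ge 0$, \[ \mathrm{VR}_t(S,d_\theta)=\mathrm{VR}_t(S_{\mathcal C},\beta)\cup \mathrm{VR}_t(S_{\mathcal Y},d_{\mathrm{reg}})\cup\Bigl(\mathrm{VR}_t(S_{\mathcal C}^{\le t},\beta)\star \mathrm{VR}_t(S_{\mathcal Y}^{\le t},d_{\mathrm{reg}})\Bigr). \]
   Context: Let $A$ be a unital $C^*$-algebra, $H$ a Hilbert space, $\mathcal X=\mathrm{CB}(A,B(H))$, $\mathcal C=\mathrm{CP}(A,B(H))$ with Bures distance $\beta$. Fix $\theta\in\mathcal C$, $\lambda>0$, $\alpha\in(0,1]$, and let $d_\theta=\beta^{BK}_{\theta,\lambda,\infty,\alpha}$ be the Bures--Kuratowski metric with $p=\infty$. It satisfies $d_\theta=\beta$ on $\mathcal C$, $d_\theta=d_{\mathrm{reg}}:=\lambda\delta_{\mathrm{reg}}^\alpha$ on $\mathcal X\setminus\mathcal C$ ($\delta_{\mathrm{reg}}$ the regular-representation metric), and $d_\theta(x,y)=\max\{r_{\mathcal C}(x),r_{\mathcal Y}(y)\}$ for $x\in\mathcal C$, $y\notin\mathcal C$, where $r_{\mathcal C}(x)=\beta(x,\theta)$, $r_{\mathcal Y}(y)=\lambda\delta_{\mathrm{reg}}(y,0)^\alpha$. $S_{\mathcal C}=S\cap\mathcal C$, $S_{\mathcal Y}=S\cap(\mathcal X\setminus\mathcal C)$, $S_{\mathcal C}^{\le t}=\{x\in S_{\mathcal C}:r_{\mathcal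 C}(x)\le t\}$, $S_{\mathcal Y}^{\le t}=\{y\in S_{\mathcal Y}:r_{\mathcal Y}(y)\le t\}$. $\mathrm{VR}_t$ denotes the Vietoris--Rips complex (finite subsets of diameter $\le t$), and for complexes $K,L$ on disjoint vertex sets $K\star L=\{\sigma\cup\tau:\sigma\in K,\tau\in L,\ \sigma,\tau\neq\varnothing\}$. *)

(* Defs.v *)
From HB Require Import structures.
From mathcomp Require Import all_boot all_order all_algebra.
From mathcomp Require Import finmap.
From mathcomp Require Import reals exp.
Set Implicit Arguments. Unset Strict Implicit. Unset Printing Implicit Defensive.
Import Order.TTheory GRing.Theory Num.Theory.
Local Open Scope ring_scope.
Local Open Scope fset_scope.

(* A simplicial complex on vertices of type X is represented by its set of
   (nonempty, finite) faces, a predicate on {fset X}. *)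
Definition complex (X : choiceType) := {fset X} -> Prop.

Definition VR (R : realType) (X : choiceType) (d : X -> X -> R) (t : R)
  (S : {fset X}) : complex X :=
  fun s => [/\ s != fset0, s `<=` S & forall x y, x \in s -> y \in s -> d x y <= t].

Definition cunion (X : choiceType) (K L : complex X) : complex X :=
  fun s => K s \/ L s.

Definition join (X : choiceType) (K L : complex X) : complex X :=
  fun u => exists s t, [/\ K s, L t, s != fset0, t != fset0 & u = s `|` t].

Definition dreg (R : realType) (X : choiceType) (lam alpha : R)
  (delta : X -> X -> R) : X -> X -> R :=
  fun x y => lam * powR (delta x y) alpha.

Definition partC (X : choiceType) (C : pred X) (S : {fset X}) : {fset X} :=
  [fset x in S | C x].
Definition partY (X : choiceType) (C : pred X) (S : {fset X}) : {fset X} :=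
  [fset x in S | ~~ C x].
Definition trunc (R : realType) (X : choiceType) (r : X -> R) (t : R)
  (S : {fset X}) : {fset X} :=
  [fset x in S | r x <= t].

(* Main.v *)
From Stdlib Require Import FunctionalExtensionality PropExtensionality.
Require Import Defs.
From HB Require Import structures.
From mathcomp Require Import all_boot all_order all_algebra.
From mathcomp Require Import finmap.
From mathcomp Require Import reals exp.
Import Order.TTheory GRing.Theory Num.Theory.
Local Open Scope ring_scope.
Local Open Scope fset_scope.

Theorem corollary6p7 (R : realType) (X : choiceType) (C : pred X)
  (beta delta_reg dtheta : X -> X -> R) (theta zero : X) (lam alpha : R)
  (hlam : 0 < lam) (halpha : 0 < alpha <= 1)
  (hCC : forall x y, C x -> C y -> dtheta x y = beta x y)
  (hYY : forall x y, ~~ C x -> ~~ C y ->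
          dtheta x y = dreg lam alpha delta_reg x y)
  (hCY : forall x y, C x -> ~~ C y ->
          dtheta x y = Num.max (beta x theta) (dreg lam alpha delta_reg y zero))
  (hYC : forall x y, C x -> ~~ C y ->
          dtheta y x = Num.max (beta x theta) (dreg lam alpha delta_reg y zero))
  (S : {fset X}) (t : R) (ht : 0 <= t) :
  VR dtheta t S =
  cunion (cunion (VR beta t (partC C S))
                 (VR (dreg lam alpha delta_reg) t (partY C S)))
         (join (VR beta t (trunc (fun x => beta x theta) t (partC C S)))
               (VR (dreg lam alpha delta_reg) t
                   (trunc (fun y => dreg lam alpha delta_reg y zero) t (partY C S)))).
Proof.
apply: functional_extensionality => u; apply: propositional_extensionality.
rewrite /VR /cunion /join /partC /partY /trunc.
split.
- case=> u0 /fsubsetP uS ud.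
  set uC := [fset x in u | C x]; set uY := [fset x in u | ~~ C x].
  have [uC0 | uCn] := eqVneq uC fset0.
    have nC : forall x, x \in u -> ~~ C x.
      move=> x xu; apply/negP => Cx.
      have : x \in uC by rewrite /uC !inE xu Cx.
      by rewrite uC0 inE.
    left; right; split => //.
      by apply/fsubsetP => x xu; rewrite !inE uS // nC.
    by move=> x y xu yu; rewrite -hYY ?nC ?ud.
  have [uY0 | uYn] := eqVneq uY fset0.
    have nC : forall x, x \in u -> C x.
      move=> x xu; apply/negPn/negP => Cx.
      have : x \in uY by rewrite /uY !inE xu Cx.
      by rewrite uY0 inE.
    left; left; split => //.
      by apply/fsubsetP => x xu; rewrite !inE uS // nC.
    by move=> x y xu yu; rewrite -hCC ?nC ?ud.
  right; exists uC, uY; split => //.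
  + split => //.
      apply/fsubsetP => x; rewrite !inE => /andP[xu Cx].
      rewrite uS // Cx /=.
      case/fset0Pn: uYn => y; rewrite inE => /andP[yu Cy].
      have := ud x y xu yu; rewrite hCY // ge_max => /andP[] //.
    move=> x y; rewrite !inE => /andP[xu Cx] /andP[yu Cy].
    by rewrite -hCC ?ud.
  + split => //.
      apply/fsubsetP => y; rewrite !inE => /andP[yu Cy].
      rewrite uS // Cy /=.
      case/fset0Pn: uCn => x; rewrite inE => /andP[xu Cx].
      have := ud x y xu yu; rewrite hCY // ge_max => /andP[] //.
    move=> x y; rewrite !inE => /andP[xu Cx] /andP[yu Cy].
    by rewrite -hYY ?ud.
  + apply/fsetP => x; rewrite !inE; by case: (C x); rewrite ?andbT ?andbF ?orbF.
- case=> [[[u0 /fsubsetP uS ud] | [u0 /fsubsetP uS ud]] | [a [b [[a0 /fsubsetP aS ad] [b0 /fsubsetP bS bd] _ _ ->]]]].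
  + split => //.
      by apply/fsubsetP => x /uS; rewrite inE => /andP[].
    move=> x y xu yu; move: (uS x xu) (uS y yu); rewrite !inE => /andP[_ Cx] /andP[_ Cy].
    by rewrite hCC ?ud.
  + split => //.
      by apply/fsubsetP => x /uS; rewrite inE => /andP[].
    move=> x y xu yu; move: (uS x xu) (uS y yu); rewrite !inE => /andP[_ Cx] /andP[_ Cy].
    by rewrite hYY ?ud.
  + split.
      case/fset0Pn: a0 => x xa; apply/fset0Pn; exists x; by rewrite inE xa.
      apply/fsubsetP => x; rewrite inE => /orP[/aS|/bS]; rewrite !inE => /andP[/andP[]].
        by [].
        by [].
    move=> x y; rewrite !inE => /orP[xa|xb] /orP[ya|yb].
    * move: (aS x xa) (aS y ya); rewrite !inE => /andP[/andP[_ Cx] _] /andP[/andP[_ Cy] _].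
      by rewrite hCC ?ad.
    * move: (aS x xa) (bS y yb); rewrite !inE => /andP[/andP[_ Cx] hx] /andP[/andP[_ Cy] hy].
      by rewrite hCY // ge_max hx hy.
    * move: (bS x xb) (aS y ya); rewrite !inE => /andP[/andP[_ Cx] hx] /andP[/andP[_ Cy] hy].
      by rewrite hYC // ge_max hx hy.
    * move: (bS x xb) (bS y yb); rewrite !inE => /andP[/andP[_ Cx] _] /andP[/andP[_ Cy] _].
      by rewrite hYY ?bd.
Qed.
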